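(* Let $(X,\Sigma,\mu)$ be a probability space, let $\mathcal{P},\mathcal{Q},\mathcal{R}\subseteq\Sigma$ be countable partitions, and let $A\in\Sigma$ with $\mu(A)>0$. Then \[\mu(A)\,\mathrm{I}_{\mu_{|A}}(\mathcal{P};\mathcal{Q}\,|\,\mathcal{R})\le\log2+\mathrm{I}_\mu(\mathcal{P};\mathcal{Q}\,|\,\mathcal{R}).\]
   Context: $\mu_{|A}=\mu(A\cap\cdot)/\mu(A)$ is the conditioned measure. $\mathrm{I}_\mu(\mathcal{P};\mathcal{Q}\,|\,\mathcal{R})=\mathrm{H}_\mu(\mathcal{P}\,|\,\mathcal{R})-\mathrm{H}_\mu(\mathcal{P}\,|\,\mathcal{Q}\vee\mathcal{R})$ is conditional mutual information. *)

(* Defs.v *)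
From Stdlib Require Import Reals List ClassicalEpsilon.
Open Scope R_scope.

Definition inter {X : Type} (A B : X -> Prop) : X -> Prop := fun x => A x /\ B x.
Definition setT {X : Type} : X -> Prop := fun _ => True.
Definition setC {X : Type} (A : X -> Prop) : X -> Prop := fun x => ~ A x.
Definition bigcup {X : Type} (F : nat -> X -> Prop) : X -> Prop :=
  fun x => exists n, F n x.

Definition is_sigma_algebra {X : Type} (S : (X -> Prop) -> Prop) : Prop :=
  S setT /\
  (forall A, S A -> S (setC A)) /\
  (forall F : nat -> X -> Prop, (forall n, S (F n)) -> S (bigcup F)).

Definition pairwise_disjoint {X : Type} (F : nat -> X -> Prop) : Prop :=
  forall i j x, i <> j -> F i x -> F j x -> False.

Definition is_prob_space {X : Type} (S : (X -> Prop) -> Prop)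
  (mu : (X -> Prop) -> R) : Prop :=
  is_sigma_algebra S /\
  (forall A, S A -> 0 <= mu A) /\
  mu setT = 1 /\
  (forall F : nat -> X -> Prop, (forall n, S (F n)) -> pairwise_disjoint F ->
     infinite_sum (fun n => mu (F n)) (mu (bigcup F))).

(* A countable measurable partition, indexed by nat (finite partitions are
   padded with empty cells, which do not affect entropies). *)
Definition is_countable_partition {X : Type} (S : (X -> Prop) -> Prop)
  (P : nat -> X -> Prop) : Prop :=
  (forall n, S (P n)) /\ pairwise_disjoint P /\ (forall x, exists n, P n x).

Definition cond_measure {X : Type} (mu : (X -> Prop) -> R) (A : X -> Prop)
  : (X -> Prop) -> R := fun B => mu (inter A B) / mu A.

Definition join {X : Type} (Q R0 : nat -> X -> Prop) : nat * nat -> X -> Prop :=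
  fun jk => inter (Q (fst jk)) (R0 (snd jk)).

Inductive ER := Fin (r : R) | Inf.

Definition fsum {I : Type} (f : I -> R) (l : list I) : R :=
  fold_right (fun i acc => f i + acc) 0 l.

Definition finite_sums {I : Type} (f : I -> R) (s : R) : Prop :=
  exists l : list I, NoDup l /\ s = fsum f l.

Definition is_esum {I : Type} (f : I -> R) (e : ER) : Prop :=
  match e with
  | Fin s => is_lub (finite_sums f) s
  | Inf => ~ bound (finite_sums f)
  end.

Definition esum {I : Type} (f : I -> R) : ER :=
  epsilon (inhabits Inf) (fun e => is_esum f e).

Definition cond_entropy {X J : Type} (nu : (X -> Prop) -> R)
  (P : nat -> X -> Prop) (C : J -> X -> Prop) : ER :=
  esum (fun ij : nat * J =>
    let a := nu (inter (P (fst ij)) (C (snd ij))) in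
    let b := nu (C (snd ij)) in
    if Rlt_dec 0 a then - a * ln (a / b) else 0).

(* difference in [0,+oo]; +oo - +oo is undefined in the paper, and gets the
   arbitrary value 0 here (it never occurs under the hypotheses used). *)
Definition ER_sub (x y : ER) : ER :=
  match x, y with
  | Fin a, Fin b => Fin (a - b)
  | Inf, Fin _ => Inf
  | _, Inf => Fin 0
  end.

Definition ER_scale (c : R) (x : ER) : ER :=
  match x with Fin a => Fin (c * a) | Inf => Inf end.

Definition ER_addR (c : R) (x : ER) : ER :=
  match x with Fin a => Fin (c + a) | Inf => Inf end.

Definition ER_le (x y : ER) : Prop :=
  match x, y with
  | Fin a, Fin b => a <= b
  | _, Inf => True
  | Inf, Fin _ => False
  end.

Definition cond_mutual_info {X : Type} (nu : (X -> Prop) -> R)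
  (P Q R0 : nat -> X -> Prop) : ER :=
  ER_sub (cond_entropy nu P R0) (cond_entropy nu P (join Q R0)).

(* Main.v *)
Require Import Defs.
From Stdlib Require Import Reals Lra Lia List ClassicalEpsilon Classical FunctionalExtensionality PropExtensionality.
Open Scope R_scope.

Definition phi (x y : R) : R := if Rlt_dec 0 x then - x * ln (x / y) else 0.
Definition cc (a M : R) : R := if Rlt_dec 0 a then ln (M / a) else 0.

Lemma ln_le1 x : 0 < x -> ln x <= x - 1.
Proof. intro H. pose proof (exp_ineq1_le (ln x)). rewrite exp_ln in H0; lra. Qed.

Lemma ln_div' x y : 0 < x -> 0 < y -> ln (x / y) = ln x - ln y.
Proof. intros. unfold Rdiv. rewrite ln_mult, ln_Rinv; try lra. apply Rinv_0_lt_compat; lra. Qed.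

Lemma ln_le' x y : 0 < x -> x <= y -> ln x <= ln y.
Proof. intros H [H1|H1]. left; apply ln_increasing; lra. subst; lra. Qed.

Lemma phi_pos x y : 0 < x -> 0 < y -> phi x y = x * (ln y - ln x).
Proof. intros. unfold phi. destruct (Rlt_dec 0 x); [|lra]. rewrite ln_div'; lra. Qed.

Lemma phi_npos x y : x <= 0 -> phi x y = 0.
Proof. intros. unfold phi. destruct (Rlt_dec 0 x); lra. Qed.

Lemma phi_nonneg x y : 0 <= x -> x <= y -> 0 <= phi x y.
Proof. intros. destruct (Rle_lt_dec x 0). rewrite phi_npos; lra.
  rewrite phi_pos by lra. pose proof (ln_le' x y r H0). nra. Qed.

Lemma phi_mono x y y' : 0 <= x -> (0 < x -> 0 < y) -> y <= y' -> phi x y <= phi x y'.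
Proof. intros. destruct (Rle_lt_dec x 0). rewrite !phi_npos; lra.
  rewrite !phi_pos by (try lra; specialize (H0 r); lra).
  pose proof (ln_le' y y' (H0 r) H1). nra. Qed.

Lemma phi_split x1 x2 y1 y2 : 0 <= x1 -> 0 <= x2 -> 0 <= y1 -> 0 <= y2 ->
  (0 < x1 -> 0 < y1) -> (0 < x2 -> 0 < y2) ->
  phi x1 y1 + phi x2 y2 <= phi (x1 + x2) (y1 + y2).
Proof.
  intros. destruct (Rle_lt_dec x1 0).
  { replace x1 with 0 by lra. rewrite !Rplus_0_l. rewrite (phi_npos 0 y1) by lra. rewrite Rplus_0_l.
    apply phi_mono; auto; lra. }
  destruct (Rle_lt_dec x2 0).
  { replace x2 with 0 by lra. rewrite !Rplus_0_r. rewrite (phi_npos 0 y2) by lra. rewrite Rplus_0_r.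
    apply phi_mono; auto; lra. }
  specialize (H3 r); specialize (H4 r0).
  rewrite !phi_pos by lra.
  set (X := x1 + x2). set (Y := y1 + y2).
  assert (HX : 0 < X) by (unfold X; lra). assert (HY : 0 < Y) by (unfold Y; lra).
  assert (E1 : ln (y1 * X / (x1 * Y)) = ln y1 + ln X - ln x1 - ln Y).
  { rewrite ln_div' by (apply Rmult_lt_0_compat; lra). rewrite !ln_mult by lra. lra. }
  assert (E2 : ln (y2 * X / (x2 * Y)) = ln y2 + ln X - ln x2 - ln Y).
  { rewrite ln_div' by (apply Rmult_lt_0_compat; lra). rewrite !ln_mult by lra. lra. }
  assert (L1 := ln_le1 (y1 * X / (x1 * Y))).
  assert (L2 := ln_le1 (y2 * X / (x2 * Y))).
  assert (P1 : 0 < y1 * X / (x1 * Y)).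
  { unfold Rdiv. apply Rmult_lt_0_compat. apply Rmult_lt_0_compat; lra.
    apply Rinv_0_lt_compat, Rmult_lt_0_compat; lra. }
  assert (P2 : 0 < y2 * X / (x2 * Y)).
  { unfold Rdiv. apply Rmult_lt_0_compat. apply Rmult_lt_0_compat; lra.
    apply Rinv_0_lt_compat, Rmult_lt_0_compat; lra. }
  specialize (L1 P1); specialize (L2 P2). rewrite E1 in L1; rewrite E2 in L2.
  assert (M1 : x1 * (y1 * X / (x1 * Y) - 1) = y1 * X / Y - x1) by (field; lra).
  assert (M2 : x2 * (y2 * X / (x2 * Y) - 1) = y2 * X / Y - x2) by (field; lra).
  assert (S : y1 * X / Y + y2 * X / Y = X) by (unfold Y; field; lra).
  assert (Q1 : x1 * (ln y1 + ln X - ln x1 - ln Y) <= x1 * (y1 * X / (x1 * Y) - 1))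
    by (apply Rmult_le_compat_l; lra).
  assert (Q2 : x2 * (ln y2 + ln X - ln x2 - ln Y) <= x2 * (y2 * X / (x2 * Y) - 1))
    by (apply Rmult_le_compat_l; lra).
  unfold X in *. nra.
Qed.

Lemma phi_sub x1 x2 M : 0 <= x1 -> 0 <= x2 -> x1 + x2 <= M ->
  phi (x1 + x2) M <= phi x1 M + phi x2 M.
Proof.
  intros. destruct (Rle_lt_dec x1 0).
  { replace x1 with 0 by lra. rewrite !Rplus_0_l. rewrite (phi_npos 0 M) by lra. rewrite Rplus_0_l. lra. }
  destruct (Rle_lt_dec x2 0).
  { replace x2 with 0 by lra. rewrite !Rplus_0_r. rewrite (phi_npos 0 M) by lra. rewrite Rplus_0_r. lra. }
  rewrite !phi_pos by lra.
  pose proof (ln_le' x1 (x1 + x2) r ltac:(lra)).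
  pose proof (ln_le' x2 (x1 + x2) r0 ltac:(lra)). nra.
Qed.

Lemma phi_hom x y c : 0 < c -> (0 < x -> 0 < y) -> phi (x / c) (y / c) = phi x y / c.
Proof.
  intros. destruct (Rle_lt_dec x 0).
  { rewrite !phi_npos; try lra. unfold Rdiv. pose proof (Rinv_0_lt_compat c H). nra. }
  specialize (H0 r).
  assert (0 < x / c) by (apply Rdiv_lt_0_compat; lra).
  assert (0 < y / c) by (apply Rdiv_lt_0_compat; lra).
  unfold phi. destruct (Rlt_dec 0 (x/c)); [|lra]. destruct (Rlt_dec 0 x); [|lra].
  replace (x / c / (y / c)) with (x / y) by (field; lra). field; lra.
Qed.

Lemma phi_self a : phi a a = 0.
Proof. unfold phi. destruct (Rlt_dec 0 a); [|lra]. replace (a / a) with 1 by (field; lra).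
  rewrite ln_1; ring. Qed.

Lemma phi_binary a b : 0 <= a -> 0 <= b -> phi a (a + b) + phi b (a + b) <= (a + b) * ln 2.
Proof.
  intros.
  assert (H1 := phi_split a b ((a+b)/2) ((a+b)/2) H H0 ltac:(lra) ltac:(lra) ltac:(lra) ltac:(lra)).
  replace ((a+b)/2 + (a+b)/2) with (a+b) in H1 by field. rewrite phi_self in H1.
  assert (K : forall x, 0 <= x -> x <= a + b -> phi x (a+b) = phi x ((a+b)/2) + x * ln 2).
  { intros x Hx Hxx. destruct (Rle_lt_dec x 0). rewrite !phi_npos by lra. replace x with 0 by lra. ring.
    rewrite !phi_pos by lra. replace (a+b) with (((a+b)/2) * 2) at 1 by field.
    rewrite ln_mult by lra. ring. }
  rewrite (K a), (K b) by lra. lra.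
Qed.

Lemma phi_diff x a M : 0 <= x -> x <= a -> a <= M -> phi x M - phi x a = x * cc a M.
Proof.
  intros. unfold cc. destruct (Rle_lt_dec x 0).
  { rewrite !phi_npos by lra. replace x with 0 by lra. ring. }
  destruct (Rlt_dec 0 a); [|lra]. rewrite !phi_pos by lra. rewrite ln_div' by lra. ring.
Qed.

Lemma cc_nonneg a M : 0 <= a -> a <= M -> 0 <= cc a M.
Proof. intros. unfold cc. destruct (Rlt_dec 0 a); [|lra]. rewrite ln_div' by lra.
  pose proof (ln_le' a M r H0). lra. Qed.

Lemma phi_cc a M : 0 <= a -> a <= M -> a * cc a M = phi a M.
Proof. intros. unfold cc. destruct (Rlt_dec 0 a).
  rewrite phi_pos, ln_div' by lra. ring. rewrite phi_npos; lra. Qed.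

Lemma fsum_nil {I} (f : I -> R) : fsum f nil = 0.
Proof. reflexivity. Qed.
Lemma fsum_cons {I} (f : I -> R) a l : fsum f (a :: l) = f a + fsum f l.
Proof. reflexivity. Qed.
Lemma fsum_app {I} (f : I -> R) l m : fsum f (l ++ m) = fsum f l + fsum f m.
Proof. induction l; simpl. ring. unfold fsum in *; simpl. rewrite IHl. ring. Qed.
Lemma fsum_map {I J} (f : J -> R) (g : I -> J) l : fsum f (map g l) = fsum (fun x => f (g x)) l.
Proof. induction l. reflexivity. change (map g (a :: l)) with (g a :: map g l). rewrite !fsum_cons, IHl. reflexivity. Qed.
Lemma fsum_le {I} (f g : I -> R) l : (forall x, In x l -> f x <= g x) -> fsum f l <= fsum g l.
Proof. induction l; intros H. rewrite !fsum_nil; lra. rewrite !fsum_cons.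
  assert (f a <= g a) by (apply H; left; auto).
  assert (fsum f l <= fsum g l) by (apply IHl; intros; apply H; right; auto). lra. Qed.
Lemma fsum_ext {I} (f g : I -> R) l : (forall x, In x l -> f x = g x) -> fsum f l = fsum g l.
Proof. induction l; intros H. reflexivity. rewrite !fsum_cons, H, IHl; auto.
  intros; apply H; right; auto. left; auto. Qed.
Lemma fsum_nonneg {I} (f : I -> R) l : (forall x, In x l -> 0 <= f x) -> 0 <= fsum f l.
Proof. intros. replace 0 with (fsum (fun _ => 0) l). apply fsum_le; auto.
  induction l. reflexivity. rewrite fsum_cons, IHl. ring. intros; apply H; right; auto. Qed.
Lemma fsum_plus {I} (f g : I -> R) l : fsum (fun x => f x + g x) l = fsum f l + fsum g l.
Proof. induction l. rewrite !fsum_nil; ring. rewrite !fsum_cons, IHl; ring. Qed.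
Lemma fsum_minus {I} (f g : I -> R) l : fsum (fun x => f x - g x) l = fsum f l - fsum g l.
Proof. induction l. rewrite !fsum_nil; ring. rewrite !fsum_cons, IHl; ring. Qed.
Lemma fsum_scal {I} (f : I -> R) c l : fsum (fun x => c * f x) l = c * fsum f l.
Proof. induction l. rewrite !fsum_nil; ring. rewrite !fsum_cons, IHl; ring. Qed.
Lemma fsum_scalr {I} (f : I -> R) c l : fsum (fun x => f x * c) l = fsum f l * c.
Proof. induction l. rewrite !fsum_nil; ring. rewrite !fsum_cons, IHl; ring. Qed.

Lemma fsum_prod {I J} (f : I * J -> R) l m :
  fsum f (list_prod l m) = fsum (fun i => fsum (fun j => f (i, j)) m) l.
Proof. induction l. reflexivity. change (list_prod (a :: l) m) with (map (fun y => (a, y)) m ++ list_prod l m). rewrite fsum_app, fsum_map, fsum_cons, IHl. reflexivity. Qed.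

Lemma NoDup_prod {I J} (l : list I) (m : list J) : NoDup l -> NoDup m -> NoDup (list_prod l m).
Proof.
  induction 1; intros Hm. constructor. simpl. apply NoDup_app.
  - apply NoDup_map_NoDup_ForallPairs; auto. intros a b _ _ E; inversion E; auto.
  - auto.
  - intros [a b] H1 H2. apply in_map_iff in H1. destruct H1 as [y [E _]]. inversion E; subst.
    apply in_prod_iff in H2. tauto.
Qed.

Lemma fsum_remove {I} (f : I -> R) a m : NoDup m -> In a m ->
  exists m', NoDup m' /\ (forall x, In x m' -> In x m /\ x <> a) /\
    (forall x, In x m -> x = a \/ In x m') /\ fsum f m = f a + fsum f m'.
Proof.
  induction 1; intros Ha. destruct Ha.
  destruct Ha as [<-|Ha].
  - exists l. split; [auto|split; [|split]].
    + intros y Hy. split. right; auto. intro; subst; contradiction.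
    + intros y [<-|Hy]; auto.
    + reflexivity.
  - destruct (IHNoDup Ha) as [m' [N1 [N2 [N3 N4]]]].
    exists (x :: m'). split; [|split; [|split]].
    + constructor; auto. intro Hx. apply N2 in Hx. tauto.
    + intros y [<-|Hy]. split. left; auto. intro; subst; contradiction.
      split. right; apply N2; auto. apply N2; auto.
    + intros y [<-|Hy]. right; left; auto. destruct (N3 y Hy); auto. right; right; auto.
    + rewrite !fsum_cons, N4. ring.
Qed.

Lemma fsum_incl {I} (f : I -> R) l m : NoDup l -> NoDup m -> (forall x, In x l -> In x m) ->
  (forall x, In x m -> 0 <= f x) -> fsum f l <= fsum f m.
Proof.
  intros Hl. revert m. induction Hl; intros m Hm Hi Hf.
  rewrite fsum_nil. apply fsum_nonneg; auto.
  destruct (fsum_remove f x m Hm (Hi x (or_introl eq_refl))) as [m' [N1 [N2 [N3 N4]]]].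
  rewrite N4, fsum_cons. apply Rplus_le_compat_l. apply IHHl; auto.
  - intros y Hy. destruct (N3 y (Hi y (or_intror Hy))); auto. subst; contradiction.
  - intros y Hy. apply Hf, N2; auto.
Qed.

Lemma esum_spec {I} (f : I -> R) : is_esum f (esum f).
Proof.
  unfold esum. apply epsilon_spec.
  destruct (classic (bound (finite_sums f))) as [B|B].
  - destruct (completeness _ B) as [s Hs]. exists 0. exists nil. split. constructor. reflexivity.
    exists (Fin s). exact Hs.
  - exists Inf. exact B.
Qed.

Lemma esum_Fin_le {I} (f : I -> R) s l : esum f = Fin s -> NoDup l -> fsum f l <= s.
Proof. intros E Hl. pose proof (esum_spec f) as H. rewrite E in H. apply H. exists l; auto. Qed.

Lemma esum_Fin_lub {I} (f : I -> R) s c : esum f = Fin s ->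
  (forall l, NoDup l -> fsum f l <= c) -> s <= c.
Proof. intros E Hc. pose proof (esum_spec f) as H. rewrite E in H. apply H.
  intros x [l [Hl ->]]. auto. Qed.

Lemma esum_bounded {I} (f : I -> R) c : (forall l, NoDup l -> fsum f l <= c) ->
  exists s, esum f = Fin s.
Proof. intros Hc. pose proof (esum_spec f) as H. destruct (esum f) as [s|].
  eauto. exfalso. apply H. exists c. intros x [l [Hl ->]]. auto. Qed.

Lemma list_bound {I} (key : I -> nat) (l : list I) : exists N, forall x, In x l -> (key x < N)%nat.
Proof. induction l. exists 0%nat; intros x []. destruct IHl as [N HN].
  exists (Nat.max N (S (key a))). intros x [<-|Hx]. lia. specialize (HN x Hx). lia. Qed.

Definition rng (N : nat) := seq 0 N.
Lemma in_rng i N : (i < N)%nat -> In i (rng N).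
Proof. intros. unfold rng. apply in_seq. lia. Qed.

Lemma set_eq {X} (E F : X -> Prop) : (forall x, E x <-> F x) -> E = F.
Proof. intros H. apply functional_extensionality; intro x. apply propositional_extensionality; auto. Qed.

Definition union {X} (A B : X -> Prop) : X -> Prop := fun x => A x \/ B x.
Definition empty {X} : X -> Prop := fun _ => False.

Definition seq2 {X} (A B : X -> Prop) (n : nat) : X -> Prop :=
  match n with 0%nat => A | 1%nat => B | _ => empty end.

Lemma bigcup_seq2 {X} (A B : X -> Prop) : bigcup (seq2 A B) = union A B.
Proof. apply set_eq; intro x. unfold bigcup, union. split.
  intros [n Hn]. destruct n as [|[|n]]; simpl in Hn; tauto.
  intros [H|H]. exists 0%nat; auto. exists 1%nat; auto. Qed.


Lemma S_T {X} (S : (X -> Prop) -> Prop) : is_sigma_algebra S -> S setT.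
Proof. intros [H _]; auto. Qed.
Lemma S_C {X} (S : (X -> Prop) -> Prop) A : is_sigma_algebra S -> S A -> S (setC A).
Proof. intros [_ [H _]]; auto. Qed.
Lemma S_empty {X} (S : (X -> Prop) -> Prop) : is_sigma_algebra S -> S empty.
Proof. intros HS. replace empty with (setC (@setT X)). apply S_C, S_T; auto.
  apply set_eq; intro x; unfold setC, setT, empty; tauto. Qed.
Lemma S_U {X} (S : (X -> Prop) -> Prop) A B : is_sigma_algebra S -> S A -> S B -> S (union A B).
Proof. intros HS HA HB. rewrite <- bigcup_seq2. pose proof HS as [_ [_ H]]. apply H.
  intros [|[|n]]; simpl; auto. apply S_empty; auto. Qed.
Lemma S_I {X} (S : (X -> Prop) -> Prop) A B : is_sigma_algebra S -> S A -> S B -> S (inter A B).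
Proof. intros HS HA HB. replace (inter A B) with (setC (union (setC A) (setC B))).
  apply S_C, S_U, S_C, HB; auto; apply S_C; auto.
  apply set_eq; intro x; unfold setC, union, inter. tauto. Qed.

Lemma sum_const m n : sum_f_R0 (fun _ => m) n = (INR n + 1) * m.
Proof. induction n. simpl. ring. simpl sum_f_R0. rewrite IHn, S_INR. ring. Qed.

Lemma mu_nonneg {X} S (mu : (X -> Prop) -> R) E : is_prob_space S mu -> S E -> 0 <= mu E.
Proof. intros [_ [H _]]; auto. Qed.

Lemma mu_empty {X} S (mu : (X -> Prop) -> R) : is_prob_space S mu -> mu empty = 0.
Proof.
  intros HP. assert (HS : is_sigma_algebra S) by apply HP.
  pose proof (mu_nonneg S mu empty HP (S_empty S HS)) as H0.
  destruct HP as [_ [_ [_ H]]].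
  specialize (H (fun _ => empty) (fun _ => S_empty S HS)).
  assert (E : bigcup (fun _ : nat => @empty X) = empty).
  { apply set_eq; intro x; unfold bigcup, empty. split. intros [_ []]. tauto. }
  rewrite E in H. destruct H0 as [H0|H0]; [|auto].
  exfalso. assert (D : pairwise_disjoint (fun _ : nat => @empty X)) by (intros i j x _ []).
  specialize (H D (mu empty) H0). destruct H as [N HN]. specialize (HN (Datatypes.S N) ltac:(lia)).
  rewrite sum_const in HN. unfold Rdist in HN. rewrite S_INR in HN.
  replace ((INR N + 1 + 1) * mu empty - mu empty) with ((INR N + 1) * mu empty) in HN by ring.
  pose proof (pos_INR N). rewrite Rabs_right in HN. nra. nra.
Qed.

Lemma mu_add2 {X} S (mu : (X -> Prop) -> R) A B : is_prob_space S mu -> S A -> S B ->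
  (forall x, A x -> B x -> False) -> mu (union A B) = mu A + mu B.
Proof.
  intros HP HA HB D. assert (HS : is_sigma_algebra S) by apply HP.
  pose proof (mu_empty S mu HP) as He.
  destruct HP as [_ [_ [_ H]]].
  assert (HF : forall n, S (seq2 A B n)) by (intros [|[|n]]; simpl; auto; apply S_empty; auto).
  assert (DF : pairwise_disjoint (seq2 A B)).
  { intros i j x Hij. destruct i as [|[|i]], j as [|[|j]]; simpl; try tauto; try lia; intros; eapply D; eauto.
  }
  specialize (H _ HF DF). rewrite bigcup_seq2 in H.
  apply (uniqueness_sum _ _ _ H).
  intros eps Heps. exists 1%nat. intros n Hn.
  assert (sum_f_R0 (fun n => mu (seq2 A B n)) n = mu A + mu B).
  { destruct n. lia. clear Hn. induction n. simpl. ring.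
    simpl sum_f_R0 in *. rewrite IHn. simpl. rewrite He. ring. }
  rewrite H0. unfold Rdist. replace (mu A + mu B - (mu A + mu B)) with 0 by ring.
  rewrite Rabs_R0; lra.
Qed.

Lemma mu_split {X} S (mu : (X -> Prop) -> R) E F : is_prob_space S mu -> S E -> S F ->
  mu E = mu (inter E F) + mu (inter E (setC F)).
Proof.
  intros HP HE HF. assert (HS : is_sigma_algebra S) by apply HP.
  rewrite <- mu_add2 with (S := S); auto.
  f_equal. apply set_eq; intro x; unfold union, inter, setC. tauto.
  apply S_I; auto. apply S_I; auto. apply S_C; auto.
  unfold inter, setC; tauto.
Qed.

Lemma mu_mono {X} S (mu : (X -> Prop) -> R) E F : is_prob_space S mu -> S E -> S F ->
  mu (inter E F) <= mu E.
Proof.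
  intros HP HE HF. assert (HS : is_sigma_algebra S) by apply HP.
  rewrite (mu_split S mu E F); auto.
  pose proof (mu_nonneg S mu (inter E (setC F)) HP ltac:(apply S_I; auto; apply S_C; auto)). lra.
Qed.

Lemma mu_le1 {X} S (mu : (X -> Prop) -> R) E : is_prob_space S mu -> S E -> mu E <= 1.
Proof.
  intros HP HE. assert (HS : is_sigma_algebra S) by apply HP.
  destruct HP as [H1 [H2 [H3 H4]]].
  replace E with (inter setT E). rewrite <- H3. apply mu_mono with S; auto. split; auto.
  apply S_T; auto. apply set_eq; intro x; unfold inter, setT; tauto.
Qed.

Lemma mu_disj_sum {X J} S (mu : (X -> Prop) -> R) (G : J -> X -> Prop) l : is_prob_space S mu ->
  (forall j, S (G j)) -> (forall j j' x, j <> j' -> G j x -> G j' x -> False) -> NoDup l ->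
  forall E, S E -> fsum (fun j => mu (inter E (G j))) l <= mu E.
Proof.
  intros HP HG D Hl. assert (HS : is_sigma_algebra S) by apply HP.
  induction Hl; intros E HE. rewrite fsum_nil. apply mu_nonneg with S; auto.
  rewrite fsum_cons. rewrite (mu_split S mu E (G x)); auto.
  apply Rplus_le_compat_l.
  rewrite <- (IHHl (inter E (setC (G x)))).
  - right. apply fsum_ext. intros y Hy. f_equal. apply set_eq; intro z. unfold inter, setC.
    split; [|tauto]. intros [H1 H2]. repeat split; auto. intro H3. apply (D y x z); auto.
    intro; subst; contradiction.
  - apply S_I; auto. apply S_C; auto.
Qed.

Lemma logsum {I} (x y : I -> R) l : (forall j, In j l -> 0 <= x j /\ x j <= y j) ->
  fsum (fun j => phi (x j) (y j)) l <= phi (fsum x l) (fsum y l).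
Proof.
  induction l; intros H.
  rewrite !fsum_nil, phi_npos; lra.
  rewrite !fsum_cons.
  assert (Ha := H a (or_introl eq_refl)).
  assert (Hl : forall j, In j l -> 0 <= x j /\ x j <= y j) by (intros; apply H; right; auto).
  assert (Sx : 0 <= fsum x l) by (apply fsum_nonneg; intros; apply Hl; auto).
  assert (Sxy : fsum x l <= fsum y l) by (apply fsum_le; intros; apply Hl; auto).
  eapply Rle_trans. apply Rplus_le_compat_l, IHl, Hl.
  apply phi_split; lra.
Qed.

Lemma fsum_swap {I J} (f : I -> J -> R) l m :
  fsum (fun i => fsum (fun j => f i j) m) l = fsum (fun j => fsum (fun i => f i j) l) m.
Proof.
  induction l. rewrite fsum_nil. symmetry. induction m. reflexivity. rewrite fsum_cons, IHm, fsum_nil. ring.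
  rewrite fsum_cons, IHl. rewrite <- fsum_plus. apply fsum_ext. intros. rewrite fsum_cons. reflexivity.
Qed.

Definition Hyp {X} S (mu : (X -> Prop) -> R) (P Q R0 : nat -> X -> Prop) A :=
  is_prob_space S mu /\ is_countable_partition S P /\ is_countable_partition S Q /\
  is_countable_partition S R0 /\ S A /\ 0 < mu A.

Ltac hyps H := destruct H as (HP & [HPm [HPd HPc]] & [HQm [HQd HQc]] & [HRm [HRd HRc]] & HA & HmA);
  pose proof (proj1 HP) as HS.
Ltac meas := repeat first [assumption | apply S_I; [assumption| |] | apply S_C; [assumption|]
  | match goal with Hm : forall n : nat, ?S0 (?F n) |- ?S0 (?F _) => apply Hm end].
Ltac seteq := apply set_eq; intro; unfold join, inter, setC, union, setT; simpl; tauto.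

Lemma L_split {X} S (mu : (X -> Prop) -> R) A E : is_prob_space S mu -> S A -> S E ->
  mu E = mu (inter A E) + mu (inter (setC A) E).
Proof. intros HP HA HE. rewrite (mu_split S mu E A); auto. f_equal; f_equal; seteq. Qed.

Lemma L_sub {X} S (mu : (X -> Prop) -> R) E F : is_prob_space S mu -> S E -> S F ->
  (forall x, E x -> F x) -> mu E <= mu F.
Proof. intros HP HE HF H. replace E with (inter F E). apply mu_mono with S; auto.
  apply set_eq; intro x; unfold inter; split; try tauto. intro; split; auto. Qed.



Lemma termG1 {X} S (mu : (X -> Prop) -> R) P Q R0 A i k : Hyp S mu P Q R0 A ->
  mu A * phi (mu (inter A (inter (P i) (R0 k))) / mu A) (mu (inter A (R0 k)) / mu A)
  + phi (mu (inter (setC A) (inter (P i) (R0 k)))) (mu (inter (setC A) (R0 k)))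
  <= phi (mu (inter (P i) (R0 k))) (mu (R0 k)).
Proof.
  intros H. hyps H.
  assert (a1 : mu (inter A (inter (P i) (R0 k))) <= mu (inter A (R0 k)))
    by (apply L_sub with S; [auto|meas|meas|unfold inter; tauto]).
  assert (a2 : mu (inter (setC A) (inter (P i) (R0 k))) <= mu (inter (setC A) (R0 k)))
    by (apply L_sub with S; [auto|meas|meas|unfold inter; tauto]).
  assert (n1 : 0 <= mu (inter A (inter (P i) (R0 k)))) by (apply mu_nonneg with S; auto; meas).
  assert (n2 : 0 <= mu (inter (setC A) (inter (P i) (R0 k)))) by (apply mu_nonneg with S; auto; meas).
  rewrite phi_hom by lra. replace (mu A * (phi (mu (inter A (inter (P i) (R0 k)))) (mu (inter A (R0 k))) / mu A))
    with (phi (mu (inter A (inter (P i) (R0 k)))) (mu (inter A (R0 k)))) by (field; lra).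
  rewrite (L_split S mu A (inter (P i) (R0 k))), (L_split S mu A (R0 k)); auto; try meas.
  apply phi_split; lra.
Qed.

Lemma termF1 {X} S (mu : (X -> Prop) -> R) P Q R0 A i k : Hyp S mu P Q R0 A ->
  0 <= phi (mu (inter A (inter (P i) (R0 k))) / mu A) (mu (inter A (R0 k)) / mu A) /\
  mu A * phi (mu (inter A (inter (P i) (R0 k))) / mu A) (mu (inter A (R0 k)) / mu A)
  <= phi (mu (inter (P i) (R0 k))) (mu (R0 k)).
Proof.
  intros H. pose proof (termG1 S mu P Q R0 A i k H) as T. hyps H.
  assert (a1 : mu (inter A (inter (P i) (R0 k))) <= mu (inter A (R0 k)))
    by (apply L_sub with S; [auto|meas|meas|unfold inter; tauto]).
  assert (a2 : mu (inter (setC A) (inter (P i) (R0 k))) <= mu (inter (setC A) (R0 k)))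
    by (apply L_sub with S; [auto|meas|meas|unfold inter; tauto]).
  assert (n1 : 0 <= mu (inter A (inter (P i) (R0 k)))) by (apply mu_nonneg with S; auto; meas).
  assert (n2 : 0 <= mu (inter (setC A) (inter (P i) (R0 k)))) by (apply mu_nonneg with S; auto; meas).
  pose proof (phi_nonneg _ _ n2 a2). split; [|lra].
  assert (0 < / mu A) by (apply Rinv_0_lt_compat; lra). unfold Rdiv. apply phi_nonneg; nra.
Qed.

Lemma basic3 {X} S (mu : (X -> Prop) -> R) P Q R0 A i j k : Hyp S mu P Q R0 A ->
  let a3 := mu (inter A (inter (P i) (inter (Q j) (R0 k)))) in
  let b3 := mu (inter (setC A) (inter (P i) (inter (Q j) (R0 k)))) in
  let a2 := mu (inter A (inter (Q j) (R0 k))) in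
  let b2 := mu (inter (setC A) (inter (Q j) (R0 k))) in
  0 <= a3 /\ a3 <= a2 /\ 0 <= b3 /\ b3 <= b2 /\
  mu (inter (P i) (inter (Q j) (R0 k))) = a3 + b3 /\ mu (inter (Q j) (R0 k)) = a2 + b2.
Proof.
  intros H. hyps H. intros.
  split. apply mu_nonneg with S; auto; meas.
  split. apply L_sub with S; [auto|meas|meas|unfold inter; tauto].
  split. apply mu_nonneg with S; auto; meas.
  split. apply L_sub with S; [auto|meas|meas|unfold inter; tauto].
  split; apply L_split with S; auto; meas.
Qed.

Lemma termG2 {X} S (mu : (X -> Prop) -> R) P Q R0 A i j k : Hyp S mu P Q R0 A ->
  let a3 := mu (inter A (inter (P i) (inter (Q j) (R0 k)))) in
  let b3 := mu (inter (setC A) (inter (P i) (inter (Q j) (R0 k)))) in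
  let a2 := mu (inter A (inter (Q j) (R0 k))) in
  let b2 := mu (inter (setC A) (inter (Q j) (R0 k))) in
  let M := mu (inter (Q j) (R0 k)) in
  phi (mu (inter (P i) (inter (Q j) (R0 k)))) M <=
    phi a3 a2 + phi b3 b2 + (a3 * cc a2 M + b3 * cc b2 M).
Proof.
  intros H. destruct (basic3 S mu P Q R0 A i j k H) as (n1 & l1 & n2 & l2 & E1 & E2).
  intros. fold a3 b3 a2 b2 in n1, l1, n2, l2, E1, E2. fold M in E2. rewrite E1.
  eapply Rle_trans. apply phi_sub; lra.
  rewrite <- (phi_diff a3 a2 M), <- (phi_diff b3 b2 M) by lra. lra.
Qed.

Lemma termF2 {X} S (mu : (X -> Prop) -> R) P Q R0 A i j k : Hyp S mu P Q R0 A ->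
  let a3 := mu (inter A (inter (P i) (inter (Q j) (R0 k)))) in
  let a2 := mu (inter A (inter (Q j) (R0 k))) in
  0 <= phi (a3 / mu A) (a2 / mu A) /\ mu A * phi (a3 / mu A) (a2 / mu A) = phi a3 a2 /\
  phi a3 a2 <= phi (mu (inter (P i) (inter (Q j) (R0 k)))) (mu (inter (Q j) (R0 k))).
Proof.
  intros H. destruct (basic3 S mu P Q R0 A i j k H) as (n1 & l1 & n2 & l2 & E1 & E2).
  assert (HmA : 0 < mu A) by apply H.
  intros. fold a3 a2 in n1, l1, E1, E2. 
  assert (0 < / mu A) by (apply Rinv_0_lt_compat; lra).
  split. unfold Rdiv. apply phi_nonneg; nra.
  split. rewrite phi_hom by lra. field; lra.
  rewrite E1, E2. pose proof (phi_nonneg _ _ n2 l2). pose proof (phi_split a3 (mu (inter (setC A) (inter (P i) (inter (Q j) (R0 k)))))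
     a2 (mu (inter (setC A) (inter (Q j) (R0 k)))) n1 n2 ltac:(lra) ltac:(lra) ltac:(lra) ltac:(lra)). lra.
Qed.

Lemma sumPsi {X} S (mu : (X -> Prop) -> R) P Q R0 A j k l : Hyp S mu P Q R0 A -> NoDup l ->
  let a2 := mu (inter A (inter (Q j) (R0 k))) in
  let b2 := mu (inter (setC A) (inter (Q j) (R0 k))) in
  let M := mu (inter (Q j) (R0 k)) in
  fsum (fun i => mu (inter A (inter (P i) (inter (Q j) (R0 k)))) * cc a2 M
               + mu (inter (setC A) (inter (P i) (inter (Q j) (R0 k)))) * cc b2 M) l <= M * ln 2.
Proof.
  intros H Hl. intros.
  destruct (basic3 S mu P Q R0 A 0%nat j k H) as (_ & _ & _ & _ & _ & E2). fold a2 b2 M in E2.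
  hyps H.
  assert (na : 0 <= a2) by (apply mu_nonneg with S; auto; meas).
  assert (nb : 0 <= b2) by (apply mu_nonneg with S; auto; meas).
  rewrite fsum_plus.
  rewrite (fsum_scalr (fun i => mu (inter A (inter (P i) (inter (Q j) (R0 k)))))).
  rewrite (fsum_scalr (fun i => mu (inter (setC A) (inter (P i) (inter (Q j) (R0 k)))))).
  assert (s1 : fsum (fun i => mu (inter A (inter (P i) (inter (Q j) (R0 k))))) l <= a2).
  { eapply Rle_trans; [|apply (mu_disj_sum S mu P l HP HPm HPd Hl (inter A (inter (Q j) (R0 k))))].
    right. apply fsum_ext. intros. f_equal. seteq. meas. }
  assert (s2 : fsum (fun i => mu (inter (setC A) (inter (P i) (inter (Q j) (R0 k))))) l <= b2).
  { eapply Rle_trans; [|apply (mu_disj_sum S mu P l HP HPm HPd Hl (inter (setC A) (inter (Q j) (R0 k))))].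
    right. apply fsum_ext. intros. f_equal. seteq. meas. }
  pose proof (cc_nonneg a2 M na ltac:(lra)). pose proof (cc_nonneg b2 M nb ltac:(lra)).
  pose proof (phi_cc a2 M na ltac:(lra)). pose proof (phi_cc b2 M nb ltac:(lra)).
  pose proof (phi_binary a2 b2 na nb). rewrite <- E2 in H3.
  assert (fsum (fun i => mu (inter A (inter (P i) (inter (Q j) (R0 k))))) l * cc a2 M <= a2 * cc a2 M)
    by (apply Rmult_le_compat_r; auto).
  assert (fsum (fun i => mu (inter (setC A) (inter (P i) (inter (Q j) (R0 k))))) l * cc b2 M <= b2 * cc b2 M)
    by (apply Rmult_le_compat_r; auto).
  lra.
Qed.

Lemma sumQR {X} S (mu : (X -> Prop) -> R) P Q R0 A N : Hyp S mu P Q R0 A ->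
  fsum (fun jk => mu (inter (Q (fst jk)) (R0 (snd jk)))) (list_prod (rng N) (rng N)) <= 1.
Proof.
  intros H. hyps H.
  assert (Hl : NoDup (list_prod (rng N) (rng N))) by (apply NoDup_prod; apply seq_NoDup).
  assert (D : forall jk jk' x, jk <> jk' -> join Q R0 jk x -> join Q R0 jk' x -> False).
  { intros [j k] [j' k'] x Hne [H1 H2] [H3 H4]. simpl in *.
    destruct (Nat.eq_dec j j'). destruct (Nat.eq_dec k k'). subst; auto.
    apply (HRd k k' x); auto. apply (HQd j j' x); auto. }
  pose proof (mu_disj_sum S mu (join Q R0) _ HP ltac:(intros [j k]; unfold join; simpl; meas) D Hl setT (S_T S HS)).
  destruct HP as [_ [_ [H3 _]]]. rewrite H3 in H. eapply Rle_trans; [|exact H].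
  right. apply fsum_ext. intros. f_equal. seteq.
Qed.

Lemma sumBeta {X} S (mu : (X -> Prop) -> R) P Q R0 A i k l : Hyp S mu P Q R0 A -> NoDup l ->
  fsum (fun j => phi (mu (inter (setC A) (inter (P i) (inter (Q j) (R0 k)))))
                     (mu (inter (setC A) (inter (Q j) (R0 k))))) l
  <= phi (mu (inter (setC A) (inter (P i) (R0 k)))) (mu (inter (setC A) (R0 k))).
Proof.
  intros H Hl.
  assert (B3 := fun j => basic3 S mu P Q R0 A i j k H).
  hyps H.
  set (b3 := fun j => mu (inter (setC A) (inter (P i) (inter (Q j) (R0 k))))).
  set (b2 := fun j => mu (inter (setC A) (inter (Q j) (R0 k)))).
  set (X0 := mu (inter (setC A) (inter (P i) (R0 k)))).
  set (Y0 := mu (inter (setC A) (R0 k))).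
  change (fsum (fun j => phi (b3 j) (b2 j)) l <= phi X0 Y0).
  eapply Rle_trans. apply logsum. intros j _. destruct (B3 j) as (_ & _ & ? & ? & _). split; auto.
  set (E' := inter (inter (setC A) (R0 k)) (setC (P i))).
  assert (HE' : S E') by (unfold E'; meas).
  assert (s1 : fsum b3 l <= X0).
  { eapply Rle_trans; [|apply (mu_disj_sum S mu Q l HP HQm HQd Hl (inter (setC A) (inter (P i) (R0 k))))].
    right. apply fsum_ext. intros. unfold b3. f_equal. seteq. meas. }
  assert (s2 : fsum (fun j => b2 j - b3 j) l <= Y0 - X0).
  { assert (EY : Y0 - X0 = mu E').
    { unfold Y0, X0, E'. rewrite (mu_split S mu (inter (setC A) (R0 k)) (P i)); auto; try meas.
      replace (mu (inter (inter (setC A) (R0 k)) (P i))) with (mu (inter (setC A) (inter (P i) (R0 k))))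
        by (f_equal; seteq). ring. }
    rewrite EY. eapply Rle_trans; [|apply (mu_disj_sum S mu Q l HP HQm HQd Hl E' HE')].
    right. apply fsum_ext. intros j _. unfold b2, b3, E'.
    rewrite (mu_split S mu (inter (setC A) (inter (Q j) (R0 k))) (P i)); auto; try meas.
    replace (mu (inter (inter (setC A) (inter (Q j) (R0 k))) (P i)))
      with (mu (inter (setC A) (inter (P i) (inter (Q j) (R0 k))))) by (f_equal; seteq).
    replace (mu (inter (inter (setC A) (inter (Q j) (R0 k))) (setC (P i))))
      with (mu (inter (inter (inter (setC A) (R0 k)) (setC (P i))) (Q j))) by (f_equal; seteq).
    ring. }
  rewrite fsum_minus in s2.
  assert (n3 : 0 <= fsum b3 l) by (apply fsum_nonneg; intros j _; destruct (B3 j) as (_ & _ & ? & _); auto).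
  assert (l3 : fsum b3 l <= fsum b2 l) by (apply fsum_le; intros j _; destruct (B3 j) as (_ & _ & _ & ? & _); auto).
  pose proof (phi_nonneg (X0 - fsum b3 l) (Y0 - fsum b2 l) ltac:(lra) ltac:(lra)) as K0.
  pose proof (phi_split (fsum b3 l) (X0 - fsum b3 l) (fsum b2 l) (Y0 - fsum b2 l) n3 ltac:(lra) ltac:(lra) ltac:(lra) ltac:(lra) ltac:(lra)) as K1.
  replace (fsum b3 l + (X0 - fsum b3 l)) with X0 in K1 by ring.
  replace (fsum b2 l + (Y0 - fsum b2 l)) with Y0 in K1 by ring. lra.
Qed.

Definition fF1 {X} (mu : (X -> Prop) -> R) A (P R0 : nat -> X -> Prop) := fun ik : nat * nat =>
  phi (mu (inter A (inter (P (fst ik)) (R0 (snd ik)))) / mu A) (mu (inter A (R0 (snd ik))) / mu A).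
Definition fG1 {X} (mu : (X -> Prop) -> R) (P R0 : nat -> X -> Prop) := fun ik : nat * nat =>
  phi (mu (inter (P (fst ik)) (R0 (snd ik)))) (mu (R0 (snd ik))).
Definition fF2 {X} (mu : (X -> Prop) -> R) A (P Q R0 : nat -> X -> Prop) := fun ijk : nat * (nat * nat) =>
  phi (mu (inter A (inter (P (fst ijk)) (join Q R0 (snd ijk)))) / mu A) (mu (inter A (join Q R0 (snd ijk))) / mu A).
Definition fG2 {X} (mu : (X -> Prop) -> R) (P Q R0 : nat -> X -> Prop) := fun ijk : nat * (nat * nat) =>
  phi (mu (inter (P (fst ijk)) (join Q R0 (snd ijk)))) (mu (join Q R0 (snd ijk))).

Lemma rect {X} S (mu : (X -> Prop) -> R) P Q R0 A N : Hyp S mu P Q R0 A ->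
  let L2 := list_prod (rng N) (rng N) in
  let L3 := list_prod (rng N) L2 in
  mu A * fsum (fF1 mu A P R0) L2 + fsum (fG2 mu P Q R0) L3
  <= ln 2 + fsum (fG1 mu P R0) L2 + mu A * fsum (fF2 mu A P Q R0) L3.
Proof.
  intros H L2 L3.
  assert (HmA : 0 < mu A) by apply H.
  assert (Hr : NoDup (rng N)) by apply seq_NoDup.
  set (T := fun ijk : nat * (nat * nat) => let i := fst ijk in let j := fst (snd ijk) in let k := snd (snd ijk) in
     phi (mu (inter A (inter (P i) (inter (Q j) (R0 k))))) (mu (inter A (inter (Q j) (R0 k))))).
  set (U := fun ijk : nat * (nat * nat) => let i := fst ijk in let j := fst (snd ijk) in let k := snd (snd ijk) in
     phi (mu (inter (setC A) (inter (P i) (inter (Q j) (R0 k))))) (mu (inter (setC A) (inter (Q j) (R0 k))))).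
  set (V := fun ijk : nat * (nat * nat) => let i := fst ijk in let j := fst (snd ijk) in let k := snd (snd ijk) in
     mu (inter A (inter (P i) (inter (Q j) (R0 k)))) * cc (mu (inter A (inter (Q j) (R0 k)))) (mu (inter (Q j) (R0 k)))
   + mu (inter (setC A) (inter (P i) (inter (Q j) (R0 k)))) * cc (mu (inter (setC A) (inter (Q j) (R0 k)))) (mu (inter (Q j) (R0 k)))).
  assert (A1 : fsum (fG2 mu P Q R0) L3 <= fsum T L3 + fsum U L3 + fsum V L3).
  { rewrite <- !fsum_plus. apply fsum_le. intros [i [j k]] _.
    apply (termG2 S mu P Q R0 A i j k H). }
  assert (A2 : fsum T L3 = mu A * fsum (fF2 mu A P Q R0) L3).
  { rewrite <- fsum_scal. apply fsum_ext. intros [i [j k]] _.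
    destruct (termF2 S mu P Q R0 A i j k H) as (_ & E & _). symmetry. exact E. }
  assert (A3 : fsum V L3 <= ln 2).
  { unfold L3. rewrite fsum_prod.
    rewrite (fsum_swap (fun i jk => V (i, jk))).
    eapply Rle_trans with (fsum (fun jk => mu (inter (Q (fst jk)) (R0 (snd jk))) * ln 2) L2).
    - apply fsum_le. intros [j k] _. apply (sumPsi S mu P Q R0 A j k (rng N) H Hr).
    - rewrite fsum_scalr. pose proof (sumQR S mu P Q R0 A N H). pose proof ln_lt_2.
      fold L2 in H0. nra. }
  assert (A4 : fsum U L3 <= fsum (fun ik => phi (mu (inter (setC A) (inter (P (fst ik)) (R0 (snd ik)))))
                                                  (mu (inter (setC A) (R0 (snd ik))))) L2).
  { unfold L3, L2. rewrite !fsum_prod. apply fsum_le. intros i _.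
    rewrite fsum_prod. rewrite (fsum_swap (fun j k => U (i, (j, k)))).
    apply fsum_le. intros k _. apply (sumBeta S mu P Q R0 A i k (rng N) H Hr). }
  assert (A5 : fsum (fun ik => phi (mu (inter (setC A) (inter (P (fst ik)) (R0 (snd ik)))))
                                                  (mu (inter (setC A) (R0 (snd ik))))) L2
     <= fsum (fG1 mu P R0) L2 - mu A * fsum (fF1 mu A P R0) L2).
  { rewrite <- fsum_scal, <- fsum_minus. apply fsum_le. intros [i k] _.
    pose proof (termG1 S mu P Q R0 A i k H). unfold fG1, fF1; simpl. lra. }
  lra.
Qed.

Theorem mainTheorem15 (X : Type) (S : (X -> Prop) -> Prop) (mu : (X -> Prop) -> R)
  (P Q R0 : nat -> X -> Prop) (A : X -> Prop) :
  is_prob_space S mu ->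
  is_countable_partition S P ->
  is_countable_partition S Q ->
  is_countable_partition S R0 ->
  S A -> 0 < mu A ->
  cond_entropy mu P (join Q R0) <> Inf ->
  ER_le (ER_scale (mu A) (cond_mutual_info (cond_measure mu A) P Q R0))
        (ER_addR (ln 2) (cond_mutual_info mu P Q R0)).
Proof.
  intros HP HPp HQp HRp HA HmA Hfin.
  assert (H : Hyp S mu P Q R0 A) by (unfold Hyp; tauto).
  assert (EF1 : cond_entropy (cond_measure mu A) P R0 = esum (fF1 mu A P R0)) by reflexivity.
  assert (EG1 : cond_entropy mu P R0 = esum (fG1 mu P R0)) by reflexivity.
  assert (EF2 : cond_entropy (cond_measure mu A) P (join Q R0) = esum (fF2 mu A P Q R0)) by reflexivity.
  assert (EG2 : cond_entropy mu P (join Q R0) = esum (fG2 mu P Q R0)) by reflexivity.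
  unfold cond_mutual_info. rewrite EF1, EF2, EG1, EG2. rewrite EG2 in Hfin.
  destruct (esum (fG2 mu P Q R0)) as [h2|] eqn:E2; [|contradiction].
  destruct (esum (fG1 mu P R0)) as [h1|] eqn:E1;
    [|destruct (ER_scale _ _); simpl; trivial].
  assert (tF1 : forall ik, 0 <= fF1 mu A P R0 ik /\ mu A * fF1 mu A P R0 ik <= fG1 mu P R0 ik).
  { intros [i k]. apply (termF1 S mu P Q R0 A i k H). }
  assert (tF2 : forall ijk, 0 <= fF2 mu A P Q R0 ijk /\ mu A * fF2 mu A P Q R0 ijk <= fG2 mu P Q R0 ijk).
  { intros [i [j k]]. destruct (termF2 S mu P Q R0 A i j k H) as (a & b & c).
    split. exact a. unfold fF2, fG2, join. cbn [fst snd]. rewrite b. exact c. }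
  assert (B1 : forall l, NoDup l -> fsum (fF1 mu A P R0) l <= h1 / mu A).
  { intros l Hl. pose proof (esum_Fin_le _ _ l E1 Hl).
    assert (fsum (fun x => mu A * fF1 mu A P R0 x) l <= fsum (fG1 mu P R0) l)
      by (apply fsum_le; intros; apply tF1).
    rewrite fsum_scal in H1. apply Rmult_le_reg_l with (mu A); auto.
    replace (mu A * (h1 / mu A)) with h1 by (field; lra). lra. }
  assert (B2 : forall l, NoDup l -> fsum (fF2 mu A P Q R0) l <= h2 / mu A).
  { intros l Hl. pose proof (esum_Fin_le _ _ l E2 Hl).
    assert (fsum (fun x => mu A * fF2 mu A P Q R0 x) l <= fsum (fG2 mu P Q R0) l)
      by (apply fsum_le; intros; apply tF2).
    rewrite fsum_scal in H1. apply Rmult_le_reg_l with (mu A); auto.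
    replace (mu A * (h2 / mu A)) with h2 by (field; lra). lra. }
  destruct (esum_bounded _ _ B1) as [a1 Ea1]. destruct (esum_bounded _ _ B2) as [a2 Ea2].
  rewrite Ea1, Ea2. simpl.
  set (K := ln 2 + h1 + mu A * a2).
  assert (Key : forall l1 l2, NoDup l1 -> NoDup l2 ->
     mu A * fsum (fF1 mu A P R0) l1 + fsum (fG2 mu P Q R0) l2 <= K).
  { intros l1 l2 H1 H2.
    destruct (list_bound (fun ik : nat * nat => (fst ik + snd ik)%nat) l1) as [N1 HN1].
    destruct (list_bound (fun ijk : nat * (nat * nat) => (fst ijk + fst (snd ijk) + snd (snd ijk))%nat) l2) as [N2 HN2].
    set (N := Nat.max N1 N2).
    assert (Hr : NoDup (rng N)) by apply seq_NoDup.
    pose proof (rect S mu P Q R0 A N H) as R. simpl in R.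
    set (L2 := list_prod (rng N) (rng N)) in R. set (L3 := list_prod (rng N) L2) in R.
    assert (i1 : fsum (fF1 mu A P R0) l1 <= fsum (fF1 mu A P R0) L2).
    { apply fsum_incl; auto. apply NoDup_prod; auto.
      intros [i k] Hx. specialize (HN1 _ Hx). simpl in HN1. apply in_prod; apply in_rng; lia.
      intros; apply tF1. }
    assert (i2 : fsum (fG2 mu P Q R0) l2 <= fsum (fG2 mu P Q R0) L3).
    { apply fsum_incl; auto. repeat apply NoDup_prod; auto.
      intros [i [j k]] Hx. specialize (HN2 _ Hx). simpl in HN2. apply in_prod. apply in_rng; lia.
      apply in_prod; apply in_rng; lia.
      intros x _. destruct (tF2 x). nra. }
    pose proof (esum_Fin_le _ _ L2 E1 ltac:(apply NoDup_prod; auto)).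
    pose proof (esum_Fin_le _ _ L3 Ea2 ltac:(repeat apply NoDup_prod; auto)).
    unfold K. nra. }
  assert (C1 : forall l2, NoDup l2 -> mu A * a1 + fsum (fG2 mu P Q R0) l2 <= K).
  { intros l2 H2.
    assert (a1 <= (K - fsum (fG2 mu P Q R0) l2) / mu A).
    { apply (esum_Fin_lub _ _ _ Ea1). intros l1 H1. pose proof (Key l1 l2 H1 H2).
      apply Rmult_le_reg_l with (mu A); auto.
      replace (mu A * ((K - fsum (fG2 mu P Q R0) l2) / mu A)) with (K - fsum (fG2 mu P Q R0) l2)
        by (field; lra). lra. }
    apply Rmult_le_compat_l with (r := mu A) in H0; [|lra].
    replace (mu A * ((K - fsum (fG2 mu P Q R0) l2) / mu A)) with (K - fsum (fG2 mu P Q R0) l2)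
      in H0 by (field; lra). lra. }
  assert (h2 <= K - mu A * a1).
  { apply (esum_Fin_lub _ _ _ E2). intros l2 H2. pose proof (C1 l2 H2). lra. }
  unfold K in H0. lra.
Qed.
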